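(* Let $X=\{X_k\}_{k\in\mathbb Z}$ be a positive strictly stationary time series satisfying Condition 1, and let $m\in\mathbb N$ be fixed. Then for every fixed $k\in\mathbb N$, $D(j,k)/\widetilde D(j,k)\xrightarrow{P}1$ as $j\to\infty$.
   Context: Setup: $\mathbb P\{X_k>x\}\sim c_Xx^{-\alpha}$ as $x\to\infty$, $\alpha>0$, $c_X>0$; $M_n:=\max_{1\le k\le n}X_k$ and $\mathbb P\{M_n\le n^{1/\alpha}x\}=\exp\{-c(n,x)x^{-\alpha}\}$, $x>0$, defines $c(n,x)>0$. Condition 1: there exist $\beta>0$, $R\in\mathbb R$, $\theta\in(0,1]$ and $c_1:(0,\infty)\to[0,\infty)$ with $c_1(x)=\mathcal O(x^{-R})$ as $x\downarrow0$, such that $|c(n,x)-\theta c_X|\le c_1(x)n^{-\beta}$ for all $x>0$ and all $n$. Block maxima: for $2^j>m$, $D(j,k):=\max_{1\le i\le 2^j}X_{2^j(k-1)+i}$ and $\widetilde D(j,k):=\max_{1\le i\le 2^j-m}X_{2^j(k-1)+i}$. *)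

(* Defs.v *)
From HB Require Import structures.
From mathcomp Require Import all_boot all_order all_algebra.
From mathcomp Require Import all_classical all_reals all_analysis.
Set Implicit Arguments. Unset Strict Implicit. Unset Printing Implicit Defensive.
Import Order.TTheory GRing.Theory Num.Theory.
Import numFieldNormedType.Exports.
Local Open Scope classical_set_scope.
Local Open Scope ring_scope.

Section Defs.
Context (d : measure_display) (T : measurableType d) (R : realType)
        (P : probability T R).

Definition strictly_stationary (X : int -> T -> R) : Prop :=
  forall (n : nat) (t : 'I_n -> int) (x : 'I_n -> R) (h : int),
    P (\bigcap_(i in [set: 'I_n]) [set w | X (t i + h) w <= x i]) =
    P (\bigcap_(i in [set: 'I_n]) [set w | X (t i) w <= x i]).

Definition regularly_varying_tail (Y : T -> R) (alpha cX : R) : Prop :=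
  fine (P [set w | x < Y w]) / (cX * x `^ (- alpha)) @[x --> +oo] --> (1 : R).

Definition Mmax (X : int -> T -> R) (n : nat) (w : T) : R :=
  \big[Num.max/X 1 w]_(1 <= k < n.+1) X (k%:Z) w.

Definition bigO_at0 (c1 : R -> R) (r : R) : Prop :=
  exists K delta : R, 0 < delta /\
    forall x : R, 0 < x -> x < delta -> c1 x <= K * x `^ (- r).

Definition condition1 (X : int -> T -> R) (alpha cX : R) : Prop :=
  exists c : nat -> R -> R,
    (forall n x, (0 < n)%N -> 0 < x ->
       0 < c n x /\
       fine (P [set w | Mmax X n w <= (n%:R) `^ (alpha^-1) * x]) =
         expR (- (c n x * x `^ (- alpha)))) /\
    exists (beta r theta : R) (c1 : R -> R),
      0 < beta /\ 0 < theta <= 1 /\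
      (forall x, 0 < x -> 0 <= c1 x) /\ bigO_at0 c1 r /\
      forall n x, (0 < n)%N -> 0 < x ->
        `|c n x - theta * cX| <= c1 x * (n%:R) `^ (- beta).

(* block maxima D(j,k) and tilde D(j,k) (k >= 1) *)
Definition Dblock (X : int -> T -> R) (j k : nat) (w : T) : R :=
  \big[Num.max/X ((2 ^ j * k.-1).+1)%:Z w]_(1 <= i < (2 ^ j).+1)
     X ((2 ^ j * k.-1 + i)%:Z) w.

Definition Dtblock (X : int -> T -> R) (m j k : nat) (w : T) : R :=
  \big[Num.max/X ((2 ^ j * k.-1).+1)%:Z w]_(1 <= i < (2 ^ j - m).+1)
     X ((2 ^ j * k.-1 + i)%:Z) w.

Definition cvg_in_prob (Y : nat -> T -> R) (l : R) : Prop :=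
  forall eps : R, 0 < eps ->
    fine (P [set w | eps < `|Y j w - l|]) @[j --> \oo] --> (0 : R).

End Defs.

(* Main.v *)
Require Import Defs.
From HB Require Import structures.
From mathcomp Require Import all_boot all_order all_algebra.
From mathcomp Require Import all_classical all_reals all_analysis.
From mathcomp Require Import measurable_realfun.
From mathcomp Require Import zify ring lra.
Import Order.TTheory GRing.Theory Num.Theory.
Import numFieldNormedType.Exports.
Local Open Scope classical_set_scope.
Local Open Scope ring_scope.



Lemma bigmax_leE (R : realType) (x0 : R) (s : seq nat) (F : nat -> R) y :
  (\big[Num.max/x0]_(i <- s) F i <= y) = (x0 <= y) && all (fun i => F i <= y) s.
Proof.
elim: s => [|a s IH]; first by rewrite big_nil andbT.
by rewrite big_cons ge_max IH /= andbCA.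
Qed.

Lemma blk_le (R : realType) (Y : nat -> R) b n z : (0 < n)%N ->
  (\big[Num.max/Y b.+1]_(1 <= i < n.+1) Y (b + i)%N <= z) =
  [forall i : 'I_n, Y (b + i.+1)%N <= z].
Proof.
move=> n0; rewrite bigmax_leE.
apply/andP/forallP => [[H0 /allP H] i|H]; first by apply: H; rewrite mem_index_iota /= ltnS.
split; first by have := H (Ordinal n0); rewrite addn1.
apply/allP => i; rewrite mem_index_iota => /andP[i1 i2].
have Hi : (i.-1 < n)%N by case: i i1 i2.
by have := H (Ordinal Hi); rewrite /= prednK.
Qed.

Lemma bigmax_ge (R : realType) (x0 : R) (s : seq nat) (F : nat -> R) i :
  i \in s -> F i <= \big[Num.max/x0]_(i <- s) F i.
Proof.
move=> iS; have := le_refl (\big[Num.max/x0]_(i <- s) F i).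
by rewrite bigmax_leE => /andP[_ /allP]; apply.
Qed.

Lemma bigmax_ge0 (R : realType) (x0 : R) (s : seq nat) (F : nat -> R) :
  x0 <= \big[Num.max/x0]_(i <- s) F i.
Proof.
have := le_refl (\big[Num.max/x0]_(i <- s) F i).
by rewrite bigmax_leE => /andP[].
Qed.

Lemma blk_eq (R : realType) (Y : nat -> R) b N m z :
  (m < N)%N -> z < \big[Num.max/Y b.+1]_(1 <= i < (N - m).+1) Y (b + i)%N ->
  (forall i, (i < m)%N -> Y (b + (N - m) + i.+1)%N <= z) ->
  \big[Num.max/Y b.+1]_(1 <= i < N.+1) Y (b + i)%N =
  \big[Num.max/Y b.+1]_(1 <= i < (N - m).+1) Y (b + i)%N.
Proof.
move=> mN zD Hl; set Dt := (X in z < X) in zD.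
apply/eqP; rewrite eq_le; apply/andP; split.
  rewrite bigmax_leE bigmax_ge0 /=; apply/allP => i.
  rewrite mem_index_iota => /andP[i1 i2].
  have [iN|iN] := leqP i (N - m).
    by apply: bigmax_ge; rewrite mem_index_iota i1 ltnS.
  have -> : (b + i = b + (N - m) + (i - (N - m)).-1.+1)%N by lia.
  apply: le_trans (ltW zD); apply: Hl; lia.
rewrite bigmax_leE.
rewrite (@bigmax_ge0 R (Y b.+1) (index_iota 1 N.+1) (fun i => Y (b + i)%N)) /=.
apply/allP => i; rewrite mem_index_iota => /andP[i1 i2].
apply: bigmax_ge; rewrite mem_index_iota i1 /=.
lia.
Qed.



Section S_c.
Context (d : measure_display) (T : measurableType d) (R : realType) (P : probability T R).

Lemma mle (f g : T -> R) : measurable_fun setT f -> measurable_fun setT g ->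
  measurable [set w | f w <= g w].
Proof.
move=> mf mg; have := measurable_fun_ler mf mg measurableT (Y := [set true]) I.
by rewrite setTI.
Qed.

Lemma mlt (f g : T -> R) : measurable_fun setT f -> measurable_fun setT g ->
  measurable [set w | f w < g w].
Proof.
move=> mf mg; have := measurable_fun_ltr mf mg measurableT (Y := [set true]) I.
by rewrite setTI.
Qed.

Lemma mbigmax (x0 : T -> R) (F : nat -> T -> R) (s : seq nat) :
  measurable_fun setT x0 -> (forall i, measurable_fun setT (F i)) ->
  measurable_fun setT (fun w => \big[Num.max/x0 w]_(i <- s) F i w).
Proof.
move=> m0 mF; elim: s => [|a s IH].
  by under eq_fun do rewrite big_nil.
under eq_fun do rewrite big_cons.
exact: measurable_maxr.
Qed.

Lemma finP (A : set T) : measurable A -> (fine (P A))%:E = P A.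
Proof. move=> mA. rewrite fineK //. apply: fin_num_measure. done. Qed.

Lemma stat1 (X : int -> {RV P >-> R}) (h : int) z :
  strictly_stationary P (fun k => X k) ->
  P [set w | z < X h w] = P [set w | z < X 1 w].
Proof.
move=> st.
have mX (i : int) : measurable_fun setT (X i) by exact: measurable_funPT.
have E (i : int) : [set w | z < X i w] = ~` [set w | X i w <= z].
  by apply/seteqP; split => w /=; rewrite ltNge => /negP.
rewrite !E !probability_setC; try by apply: mle.
have := st 1%N (fun _ => 1) (fun _ => z) (h - 1).
have F (i : int) : \bigcap_(j in [set: 'I_1]) [set w | X i w <= z] = [set w | X i w <= z].
  apply/seteqP; split => w /=; first by move=> /(_ ord0); apply.
  by move=> H j _.
by rewrite addrC subrK !F => ->.
Qed.

End S_c.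



Section S_d.
Context (d : measure_display) (T : measurableType d) (R : realType) (P : probability T R).

Lemma Mmax_eq (X : int -> T -> R) n w :
  Mmax X n w = \big[Num.max/(fun i => X i%:Z w) 0.+1]_(1 <= i < n.+1) (fun i => X i%:Z w) (0 + i)%N.
Proof. by []. Qed.

Lemma statD (X : int -> {RV P >-> R}) b n z : (0 < n)%N ->
  strictly_stationary P (fun k => X k) ->
  P [set w | \big[Num.max/X (b.+1)%:Z w]_(1 <= i < n.+1) X ((b + i)%:Z) w <= z]
  = P [set w | Mmax (fun k => X k) n w <= z].
Proof.
move=> n0 st.
have := st n (fun i => (i.+1)%:Z) (fun _ => z) b%:Z.
have -> : \bigcap_(i in [set: 'I_n]) [set w | X ((i.+1)%:Z + b%:Z) w <= z] =
   [set w | \big[Num.max/X (b.+1)%:Z w]_(1 <= i < n.+1) X ((b + i)%:Z) w <= z].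
  apply/seteqP; split => w /=.
    move=> H; have := @blk_le R (fun i => X i%:Z w) b n z n0; rewrite /= => ->.
    by apply/forallP => i; rewrite addnC PoszD; exact: H.
  have := @blk_le R (fun i => X i%:Z w) b n z n0; rewrite /= => -> /forallP H i _.
  by rewrite -PoszD addnC; exact: H.
have -> : \bigcap_(i in [set: 'I_n]) [set w | X ((i.+1)%:Z) w <= z] =
   [set w | Mmax (fun k => X k) n w <= z].
  apply/seteqP; split => w /=; rewrite Mmax_eq.
    move=> H; have := @blk_le R (fun i => X i%:Z w) 0 n z n0; rewrite /= => ->.
    by apply/forallP => i; exact: H.
  have := @blk_le R (fun i => X i%:Z w) 0 n z n0; rewrite /= => -> /forallP H i _.
  exact: H.
by [].
Qed.
End S_d.



Section S_e.
Context (d : measure_display) (T : measurableType d) (R : realType) (P : probability T R).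

Lemma keybound (X : int -> {RV P >-> R}) (m j k : nat) (eps z : R) :
  (forall k w, 0 < X k w) ->
  strictly_stationary P (fun k => X k) ->
  (m < 2 ^ j)%N -> 0 < eps ->
  fine (P [set w | eps < `|Dblock (fun i => X i) j k w / Dtblock (fun i => X i) m j k w - 1|])
  <= fine (P [set w | Mmax (fun k => X k) (2 ^ j - m) w <= z])
     + fine (P [set w | z < X 1 w]) *+ m.
Proof.
move=> Xpos st mN eps0.
have mX (i : int) : measurable_fun setT (X i) by exact: measurable_funPT.
set b := (2 ^ j * k.-1)%N.
set n := (2 ^ j - m)%N.
have n0 : (0 < n)%N by rewrite /n subn_gt0.
set D := Dblock (fun i => X i) j k.
set Dt := Dtblock (fun i => X i) m j k.
have Dt0 w : 0 < Dt w.
  apply: lt_le_trans (Xpos (b.+1)%:Z w) _.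
  exact: (@bigmax_ge0 R (X (b.+1)%:Z w) (index_iota 1 n.+1) (fun i => X (b + i)%:Z w)).
have mD : measurable_fun setT D.
  by rewrite /D /Dblock; apply: mbigmax => [|i]; exact: mX.
have mDt : measurable_fun setT Dt.
  by rewrite /Dt /Dtblock; apply: mbigmax => [|i]; exact: mX.
have -> : [set w | eps < `|D w / Dt w - 1|] = [set w | eps * Dt w < `|D w - Dt w|].
  apply/seteqP; split => w /=.
    by rewrite -{1}(divff (lt0r_neq0 (Dt0 w))) -mulrBl normrM normfV (gtr0_norm (Dt0 w)) ltr_pdivlMr.
  by rewrite -{1}(divff (lt0r_neq0 (Dt0 w))) -mulrBl normrM normfV (gtr0_norm (Dt0 w)) ltr_pdivlMr.
pose U i := [set w | z < X (b + n + i.+1)%:Z w].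
have mU i : measurable (U i) by apply: mlt => //; exact: measurable_cst.
have mB : measurable [set w | Dt w <= z] by apply: mle => //; exact: measurable_cst.
have mA : measurable [set w | eps * Dt w < `|D w - Dt w|].
  apply: mlt; first exact: measurable_funM.
  by apply: measurableT_comp => //; exact: measurable_funB.
have incl : [set w | eps * Dt w < `|D w - Dt w|] `<=`
    [set w | Dt w <= z] `|` \big[setU/set0]_(i < m) U i.
  move=> w /= Hw.
  have [Hle|Hlt] := leP (Dt w) z; first by left.
  right; rewrite -bigcup_mkord.
  have [[i [im Hi]]|none] := pselect (exists i, (i < m)%N /\ z < X (b + n + i.+1)%:Z w).
    by exists i.
  exfalso.
  have Hl : forall i, (i < m)%N -> X (b + n + i.+1)%:Z w <= z.
    move=> i im; rewrite leNgt; apply/negP => H; apply: none; by exists i.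
  have := @blk_eq R (fun i => X i%:Z w) b (2 ^ j) m z mN Hlt Hl.
  rewrite /= => E.
  move: Hw; rewrite /D /Dt /Dblock /Dtblock -/b -/n E subrr normr0.
  rewrite ltNge => /negP; apply; rewrite pmulr_rge0 //.
  exact: ltW (Dt0 w).
have mUU : measurable (\big[setU/set0]_(i < m) U i) by apply: bigsetU_measurable.
pose A := [set w | eps * Dt w < `|D w - Dt w|].
pose B := [set w | Dt w <= z].
have h1 : (P A <= P B + \sum_(i < m) P (U i))%E.
  apply: le_trans (le_measure _ _ _ incl) _; rewrite ?inE //.
    exact: measurableU.
  apply: le_trans (measureU2 _ mB mUU) _.
  apply: leeD2l; apply: Boole_inequality => i _; exact: mU.
have h2 : P B = P [set w | Mmax (fun k => X k) n w <= z].
  by rewrite /Dt /Dtblock -/b -/n; exact: statD.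
pose C := [set w | z < X 1 w].
have h3 : (\sum_(i < m) P (U i) = P C *+ m)%E.
  rewrite (eq_bigr (fun=> P C)); last by move=> i _; exact: stat1.
  by rewrite sumr_const card_ord.
have mM : measurable [set w | Mmax (fun k => X k) n w <= z].
  apply: mle; last exact: measurable_cst.
  by rewrite /Mmax; apply: mbigmax => [|i]; exact: mX.
have m1 : measurable C by apply: mlt => //; exact: measurable_cst.
move: h1; rewrite h2 h3 -(@finP _ _ _ P _ mA) -(@finP _ _ _ P _ mM) -(@finP _ _ _ P _ m1) -EFin_natmul -EFinD lee_fin.
done.
Qed.
End S_e.



Lemma expRN_lt (R : realType) (y : R) : 0 < y -> expR (- y) < y^-1.
Proof.
move=> y0; rewrite expRN ltf_pV2 ?posrE ?expR_gt0 //.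
have := expR_ge1Dx y; lra.
Qed.

Lemma nbhsy (R : realType) (Q : R -> Prop) :
  (\forall x \near +oo, Q x) -> exists M, forall x, M < x -> Q x.
Proof. by case=> M [_ HM]; exists M. Qed.

Lemma powR_invK (R : realType) (y a : R) : 0 < a -> 0 <= y -> (y `^ a^-1) `^ a = y.
Proof. by move=> a0 y0; rewrite -powRrM mulVf ?gt_eqF // powRr1. Qed.

Lemma powR_z (R : realType) (n x a : R) : 0 < a -> 0 <= n -> 0 <= x ->
  (n `^ a^-1 * x) `^ (- a) = n^-1 * x `^ (- a).
Proof.
move=> a0 n0 x0; rewrite powRM ?powR_ge0 //.
by rewrite [X in X * _]powRN powR_invK.
Qed.

Lemma powR_mono (R : realType) (K n b : R) : 0 <= b -> 0 <= K -> K <= n -> K `^ b <= n `^ b.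
Proof.
move=> b0 K0 Kn; apply: ge0_ler_powR => //; rewrite nnegrE //.
exact: le_trans Kn.
Qed.

Theorem mainTheorem8 (d : measure_display) (T : measurableType d)
  (R : realType) (P : probability T R) (X : int -> {RV P >-> R})
  (alpha cX : R) (m : nat) :
  0 < alpha -> 0 < cX ->
  (forall k w, 0 < X k w) ->
  strictly_stationary P (fun k => X k) ->
  (forall k, regularly_varying_tail P (X k) alpha cX) ->
  condition1 P (fun k => X k) alpha cX ->
  forall k : nat, (0 < k)%N ->
    cvg_in_prob P
      (fun j w => Dblock (fun i => X i) j k w / Dtblock (fun i => X i) m j k w)
      1.
Proof.
move=> a0 cX0 Xpos st rv [c [Hc [beta [r [theta [c1 [beta0 [/andP[th0 th1] [c10 [_ Hcb]]]]]]]]]] k k0 eps eps0.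
apply/cvgrPdist_lt => δ δ0.
set a := theta * cX / 2.
have aa : 0 < a by rewrite /a; apply: divr_gt0 => //; apply: mulr_gt0.
have ad0 : 0 < a * (δ / 2) by apply: mulr_gt0 => //; apply: divr_gt0.
set x := (a * (δ / 2)) `^ alpha^-1.
have x0 : 0 < x by apply: powR_gt0.
set x' := x `^ (- alpha).
have x'0 : 0 < x' by apply: powR_gt0.
have xa : a * x' = 2 / δ.
  rewrite /x' powRN powR_invK //; last exact: ltW.
  by field; apply/andP; split; apply: lt0r_neq0.
have [M HM] : exists M, forall z, M < z ->
    fine (P [set w | z < X 1 w]) < 2 * (cX * z `^ (- alpha)).
  have := rv 1; rewrite /regularly_varying_tail => /cvgrPdist_lt/(_ _ ltr01) /nbhsy [M HM].
  exists (Num.max M 0) => z; rewrite gt_max => /andP[zM z0].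
  have cz : 0 < cX * z `^ (- alpha) by apply: mulr_gt0 => //; apply: powR_gt0.
  have := HM z zM; rewrite /= ltr_norml => /andP[H _].
  rewrite -ltr_pdivrMr //; lra.
set u := 2 * cX * m%:R * x'.
have u0 : 0 <= u.
  rewrite /u; apply: mulr_ge0; last exact: ltW.
  apply: mulr_ge0; last exact: ler0n. lra.
set K1 := (c1 x / a + 1) `^ beta^-1.
set K2 := 2 * u / δ + 1.
set K3 := (`|M| / x + 1) `^ alpha.
have K10 : 0 <= K1 by apply: powR_ge0.
have K20 : 0 <= K2 by rewrite /K2; apply: addr_ge0 => //; apply: divr_ge0 => //; [apply: mulr_ge0|]; lra.
have K30 : 0 <= K3 by apply: powR_ge0.
set K := K1 + K2 + K3.
have K0 : 0 <= K by rewrite /K; lra.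
have [N0 KN0] : exists N0 : nat, K < N0%:R by exists (Num.Def.archi_bound K); exact: archi_boundP.
near=> j.
have Hj : ((N0 + m).+1 <= j)%N by near: j; exact: nbhs_infty_ge.
have j2 : (j < 2 ^ j)%N by exact: ltn_expl.
have mN : (m < 2 ^ j)%N.
  by apply: leq_ltn_trans (leq_trans _ Hj) j2; rewrite -addSn leq_addl.
have nN0 : (N0 < 2 ^ j - m)%N.
  by rewrite ltn_subRL addnC; exact: ltn_trans Hj j2.
set n := (2 ^ j - m)%N in nN0 *.
have nK : K < n%:R by apply: lt_trans KN0 _; rewrite ltr_nat.
have nat0 : (0 < n)%N by exact: leq_ltn_trans (leq0n _) nN0.
have n0 : 0 < n%:R :> R by rewrite ltr0n.
have K1n : K1 <= n%:R by rewrite /K in nK; lra.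
have K2n : K2 <= n%:R by rewrite /K in nK; lra.
have K3n : K3 <= n%:R by rewrite /K in nK; lra.
set z := n%:R `^ alpha^-1 * x.
have key := @keybound _ _ _ P X m j k eps z Xpos st mN eps0.
rewrite sub0r normrN ger0_norm; last by apply: fine_ge0; exact: measure_ge0.
apply: le_lt_trans key _.
rewrite (proj2 (Hc n x nat0 x0)) -/x'.
have cge : a <= c n x.
  have H := Hcb n x nat0 x0.
  have nb : c1 x / a + 1 <= n%:R `^ beta.
    rewrite -[X in X <= _](@powR_invK R _ beta) //; last first.
      by apply: addr_ge0 => //; apply: divr_ge0 => //; [apply: c10|apply: ltW].
    by apply: powR_mono => //; apply: ltW.
  have nb0 : 0 < n%:R `^ beta by apply: powR_gt0.
  have c1le : c1 x * n%:R `^ (- beta) <= a.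
    rewrite powRN ler_pdivrMr //.
    have -> : c1 x = a * (c1 x / a) by field; apply: lt0r_neq0.
    have := c10 x x0; nra.
  have : theta * cX - c n x <= `|c n x - theta * cX|.
    by rewrite distrC; exact: ler_norm.
  rewrite /a in c1le *; lra.
have E : expR (- (c n x * x')) < δ / 2.
  have h1 : expR (- (c n x * x')) <= expR (- (a * x')).
    by rewrite ler_expR lerN2; apply: ler_wpM2r => //; apply: ltW.
  apply: le_lt_trans h1 _.
  rewrite xa; apply: lt_le_trans (@expRN_lt R (2 / δ) _) _; first by apply: divr_gt0.
  by rewrite invf_div.
have zM : M < z.
  have h : `|M| / x + 1 <= n%:R `^ alpha^-1.
    rewrite -[X in X <= _](@powR_invK R _ alpha^-1) //; last first.
      by apply: addr_ge0 => //; apply: divr_ge0 => //; apply: ltW.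
      by rewrite invr_gt0.
    rewrite invrK; apply: powR_mono; [by rewrite invr_ge0 ltW | exact: K30 | exact: K3n].
  have : (`|M| / x + 1) * x <= z by rewrite /z; apply: ler_wpM2r => //; apply: ltW.
  have -> : (`|M| / x + 1) * x = `|M| + x by field; apply: lt0r_neq0.
  have := ler_norm M; lra.
have Hp := HM z zM.
have zp : z `^ (- alpha) = n%:R^-1 * x'.
  by rewrite /z powR_z //; apply: ltW.
rewrite zp in Hp.
have pm : fine (P [set w | z < X 1 w]) *+ m <= δ / 2.
  rewrite -[_ *+ m]mulr_natr.
  have pge : 0 <= fine (P [set w | z < X 1 w]) by apply: fine_ge0; exact: measure_ge0.
  have m0 : 0 <= m%:R :> R by [].
  have h1 : fine (P [set w | z < X 1 w]) * m%:R <= 2 * (cX * (n%:R^-1 * x')) * m%:R.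
    by apply: ler_wpM2r => //; apply: ltW.
  apply: le_trans h1 _.
  have -> : 2 * (cX * (n%:R^-1 * x')) * m%:R = u / n%:R.
    by rewrite /u; field; apply: lt0r_neq0.
  rewrite ler_pdivrMr //.
  have -> : u = δ / 2 * (2 * u / δ) by field; apply: lt0r_neq0.
  rewrite /K2 in K2n.
  have : 0 <= 2 * u / δ by apply: divr_ge0 => //; [apply: mulr_ge0|]; lra.
  nra.
lra.
Unshelve. all: end_near.
Qed.
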